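(* Let $P\ge 2$. Let $\beta_1,\dots,\beta_{P-1}$ be real parameters varying in an open set, put $\beta_P:=1-\sum_{i=1}^{P-1}\beta_i$, and let $\omega_i=\omega_i(\beta_1,\dots,\beta_{P-1})$, $i=1,\dots,P$, be differentiable functions. Define $\Gamma(\kappa)=\prod_{i=1}^{P}|1-\omega_i\kappa|^{\beta_i}$. Let $\kappa_1,\dots,\kappa_{P-1}$ be differentiable functions of the $\beta$'s which are critical points of $\Gamma$, i.e. $\sum_{i=1}^P\frac{\beta_i\omega_i}{1-\kappa\,\omega_i}=0$ at $\kappa=\kappa_j$, and let $\kappa_P:=\kappa_M=2$ (a constant). Assume that $\frac{\partial}{\partial\beta_q}\Gamma(\kappa_i)=0$ for all $i=1,\dots,P$ and $q=1,\dots,P-1$ (total derivatives with respect to $\beta_q$). Assume moreover that $\omega_1,\dots,\omega_P$ are pairwise distinct and nonzero, $\beta_1,\dots,\beta_P$ are nonzero, $\kappa_1,\dots,\kappa_P$ are pairwise distinct and nonzero, and $1-\kappa_i\omega_j\neq 0$ for all $i,j$. Then for $i=1,\dots,P$ and $q=1,\dots,P-1$, $$\frac{\partial\omega_i}{\partial\beta_q}=\sum_{j=1}^{P}\frac{1-\kappa_j\omega_i}{\beta_i\kappa_j}\prod_{\substack{k=1\\k\neq j}}^{P}\frac{1-\kappa_k\omega_i}{\kappa_k-\kappa_j}\prod_{\substack{l=1\\l\neq i}}^{P}\frac{1-\kappa_j\omega_l}{\omega_l-\omega_i}\;\log\left|\frac{1-\kappa_j\omega_q}{1-\kappa_j\o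mega_P}\right|.$$
   Context: This arises in the optimization of a $P$-level Scheduled Relaxation Jacobi (SRJ) scheme: weights $\omega_i$ are applied with relative frequencies $\beta_i$, and $\Gamma(\kappa)$ is the per-iteration amplification factor, with $\kappa$ ranging over $[\kappa_m,\kappa_M]$, $\kappa_M=2$. *)

(* Defs.v *)
From HB Require Import structures.
From mathcomp Require Import all_boot all_order all_algebra.
From mathcomp Require Import all_classical all_reals all_analysis.
Set Implicit Arguments. Unset Strict Implicit. Unset Printing Implicit Defensive.
Import Order.TTheory GRing.Theory Num.Theory.
Import numFieldNormedType.Exports.
Local Open Scope ring_scope.

(* P = n.+2 levels; parameters beta_1..beta_{P-1} form a row vector of size n.+1.
   Indices 1..P are 'I_(n.+2) (0-based); index P is ord_max. *)

Definition extP {R : Type} (n : nat) (f : 'I_n.+1 -> R) (last : R) (i : 'I_n.+2) : R :=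
  match insub (val i) : option 'I_n.+1 with
  | Some j => f j
  | None => last
  end.

Definition betaP {R : realType} (n : nat) (b : 'rV[R]_n.+1) (i : 'I_n.+2) : R :=
  extP (fun j => b 0 j) (1 - \sum_(j < n.+1) b 0 j) i.

Definition kappaP {R : realType} (n : nat) (kap : 'I_n.+1 -> 'rV[R]_n.+1 -> R)
  (b : 'rV[R]_n.+1) (i : 'I_n.+2) : R :=
  extP (fun j => kap j b) 2 i.

Definition Gamma {R : realType} (n : nat) (om : 'I_n.+2 -> 'rV[R]_n.+1 -> R)
  (b : 'rV[R]_n.+1) (k : R) : R :=
  \prod_(i < n.+2) (`|1 - om i b * k| `^ betaP b i).

Definition e_dir {R : realType} (n : nat) (q : 'I_n.+1) : 'rV[R]_n.+1 :=
  delta_mx 0 q.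

(* Main.v *)
Require Import Defs.
From HB Require Import structures.
From mathcomp Require Import all_boot all_order all_algebra.
From mathcomp Require Import all_classical all_reals all_analysis.
From mathcomp Require Import zify ring lra.
Import Order.TTheory GRing.Theory Num.Theory.
Import numFieldNormedType.Exports.
Local Open Scope ring_scope.

Set Implicit Arguments. Unset Strict Implicit.
Section Alg.
Variable R : fieldType.

Lemma size_lin (a b : R) : (size (a%:P + b%:P * 'X)%R <= 2)%N.
Proof.
apply: leq_trans (size_polyD _ _) _; rewrite geq_max; apply/andP; split.
  exact: leq_trans (size_polyC_leq1 _) _.
apply: leq_trans (size_polyMleq _ _) _.
rewrite size_polyX addn2 /=; exact: leq_trans (size_polyC_leq1 _) _.
Qed.

Lemma size_prod_lin (I : Type) (r : seq I) (P : pred I) (F : I -> {poly R}) :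
  (forall i, size (F i) <= 2)%N ->
  (size (\prod_(i <- r | P i) F i)%R <= (count P r).+1)%N.
Proof.
move=> hF; elim: r => [|x r IH]; first by rewrite big_nil size_poly1.
rewrite big_cons /=; case: (P x) => //=.
apply: leq_trans (size_polyMleq _ _) _.
have h2 := hF x; move: IH h2; rewrite -subn1; set s := size (\prod_(i <- r | P i) F i); lia.
Qed.

Lemma size_sum_le (I : Type) (r : seq I) (P : pred I) (F : I -> {poly R}) m :
  (forall i, size (F i) <= m)%N -> (size (\sum_(i <- r | P i) F i)%R <= m)%N.
Proof.
move=> hF; elim/big_ind: _ => //; first by rewrite size_poly0.
move=> p q hp hq; apply: leq_trans (size_polyD _ _) _; by rewrite geq_max hp hq.
Qed.

Lemma poly_eq_nodes N (p q : {poly R}) (x : 'I_N -> R) :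
  injective x -> (size p <= N)%N -> (size q <= N)%N ->
  (forall j, p.[x j] = q.[x j]) -> p = q.
Proof.
move=> ix sp sq e; apply/eqP; rewrite -subr_eq0; apply/negPn/negP => ne.
have := max_poly_roots ne (rs := map x (enum 'I_N)).
rewrite map_inj_uniq ?enum_uniq // size_map size_enum_ord.
have -> : all (root (p - q)) [seq x i | i <- enum 'I_N].
  by apply/allP => y /mapP [j _ ->]; rewrite /root hornerD hornerN e subrr.
move=> /(_ isT isT); apply/negP; rewrite -leqNgt.
apply: leq_trans (size_polyD _ _) _; by rewrite size_polyN geq_max sp sq.
Qed.
End Alg.
Unset Implicit Arguments. Set Strict Implicit.

Lemma prodc (R : fieldType) N (j : 'I_N) (c : R) : \prod_(k | k != j) c = c ^+ N.-1.
Proof. by rewrite prodr_const cardC1 card_ord. Qed.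
Lemma cnt N (j : 'I_N) : count (fun k => k != j) (index_enum 'I_N) = N.-1.
Proof. by rewrite -[N in N.-1]card_ord -(cardC1 j) cardE /enum_mem size_filter. Qed.
Lemma F_ident (R : fieldType) N (K w : 'I_N -> R) (i : 'I_N) (z : R) :
  (forall j k, j != k -> K j != K k) -> (forall j, K j != 0) ->
  \sum_j (\prod_(m | m != i) (1 - K j * w m)) *
     \prod_(k | k != j) ((1 - K k * z) / (K k - K j))
  = \prod_(m | m != i) (w m - z).
Proof.
case: N K w i => [|N] K w i; first by case: i.
move=> Kd K0.
pose h j := \prod_(m | m != i) (1 - K j * w m).
pose D j := \prod_(k | k != j) (K k - K j).
pose Fp := \sum_j (h j / D j) *: \prod_(k | k != j) ((1:R)%:P + (- K k)%:P * 'X).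
pose Gp := \prod_(m | m != i) ((w m)%:P + (-1)%:P * 'X).
have evF y : Fp.[y] = \sum_j h j / D j * \prod_(k | k != j) (1 - K k * y).
  rewrite horner_sum; apply: eq_bigr => j _; rewrite hornerZ horner_prod.
  congr (_ * _); apply: eq_bigr => k _.
  by rewrite hornerD hornerM !hornerC hornerX mulNr.
have evG y : Gp.[y] = \prod_(m | m != i) (w m - y).
  rewrite horner_prod; apply: eq_bigr => m _.
  by rewrite hornerD hornerM !hornerC hornerX mulN1r.
have -> : \sum_j (\prod_(m | m != i) (1 - K j * w m)) *
     \prod_(k | k != j) ((1 - K k * z) / (K k - K j)) = Fp.[z].
  rewrite evF; apply: eq_bigr => j _; rewrite prodf_div -/(D j) -/(h j).
  by rewrite mulrA [RHS]mulrAC.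
suff -> : Fp = Gp by rewrite evG.
apply: (@poly_eq_nodes _ N.+1 _ _ (fun j => (K j)^-1)).
- by move=> j k /invr_inj e; apply/eqP; apply: contraLR isT => /Kd; rewrite e eqxx.
-   apply: size_sum_le => j; apply: leq_trans (size_scale_leq _ _) _.
  apply: leq_trans (size_prod_lin _ _ _) _; first by move=> k; exact: size_lin.
  by rewrite cnt.
-   apply: leq_trans (size_prod_lin _ _ _) _; first by move=> k; exact: size_lin.
  by rewrite cnt.
move=> j; rewrite evF evG [LHS](bigD1 j) //= [X in _ + X]big1 ?addr0; last first.
  move=> k kj; rewrite (bigD1 j) 1?eq_sym //= mulfV ?K0 // subrr mul0r.
  by rewrite mulr0.
set c := - (K j)^-1.
have -> : \prod_(k | k != j) (1 - K k * (K j)^-1) = D j * c ^+ N.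
  rewrite -(@prodc _ N.+1 j c) -big_split /=; apply: eq_bigr => k _.
  by rewrite /c; field; rewrite K0.
have -> : \prod_(m | m != i) (w m - (K j)^-1) = h j * c ^+ N.
  rewrite -(@prodc _ N.+1 i c) -big_split /=; apply: eq_bigr => k _.
  by rewrite /c; field; rewrite K0.
rewrite mulrA mulfVK //.
rewrite /D prodf_seq_neq0; apply/allP => k _; apply/implyP => kj.
by rewrite subr_eq0 Kd.
Qed.
Lemma cauchy_inv (R : fieldType) N (K w bt x L : 'I_N -> R) (i : 'I_N) :
  (forall j k, j != k -> K j != K k) -> (forall j, K j != 0) ->
  (forall j l, 1 - K j * w l != 0) -> (forall l m, l != m -> w l != w m) ->
  bt i != 0 ->
  (forall j, L j = K j * \sum_l bt l * x l / (1 - K j * w l)) ->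
  x i = \sum_j ((1 - K j * w i) / (bt i * K j)
       * (\prod_(k | k != j) ((1 - K k * w i) / (K k - K j)))
       * (\prod_(l | l != i) ((1 - K j * w l) / (w l - w i)))
       * L j).
Proof.
move=> Kd K0 Kw wd bt0 eL.
pose A l := \prod_k (1 - K k * w l).
pose Di := \prod_(m | m != i) (w m - w i).
pose h j := \prod_(m | m != i) (1 - K j * w m).
have A0 l : A l != 0 by rewrite /A prodf_seq_neq0; apply/allP => k _; exact: Kw.
have Di0 : Di != 0.
  rewrite /Di prodf_seq_neq0; apply/allP => k _; apply/implyP => ki.
  by rewrite subr_eq0 wd.
have D0 j : \prod_(k | k != j) (K k - K j) != 0.
  rewrite prodf_seq_neq0; apply/allP => k _; apply/implyP => kj.
  by rewrite subr_eq0 Kd.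
have step j l : (1 - K j * w i) / (bt i * K j)
       * (\prod_(k | k != j) ((1 - K k * w i) / (K k - K j)))
       * (\prod_(m | m != i) ((1 - K j * w m) / (w m - w i)))
       * (K j / (1 - K j * w l))
   = A i / (bt i * Di * A l) *
       (h j * \prod_(k | k != j) ((1 - K k * w l) / (K k - K j))).
  rewrite !prodf_div -/Di -/(h j).
  have -> : A i = (1 - K j * w i) * \prod_(k | k != j) (1 - K k * w i).
    by rewrite /A (bigD1 j).
  have -> : A l = (1 - K j * w l) * \prod_(k | k != j) (1 - K k * w l).
    by rewrite /A (bigD1 j).
  have := D0 j; have := K0 j; have := Kw j l; have := Kw j i.
  have : \prod_(k | k != j) (1 - K k * w i) != 0.
    by rewrite prodf_seq_neq0; apply/allP => k _; apply/implyP => _; exact: Kw.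
  have : \prod_(k | k != j) (1 - K k * w l) != 0.
    by rewrite prodf_seq_neq0; apply/allP => k _; apply/implyP => _; exact: Kw.
  move: Di0 bt0.
  set a := \prod_(k | k != j) (1 - K k * w i).
  set b := \prod_(k | k != j) (1 - K k * w l).
  set d := \prod_(k | k != j) (K k - K j).
  move=> p1 p2 p3 p4 p5 p6 p7 p8; field; by rewrite p1 p2 p3 p6 p7 p8.
pose c j := (1 - K j * w i) / (bt i * K j)
       * (\prod_(k | k != j) ((1 - K k * w i) / (K k - K j)))
       * (\prod_(m | m != i) ((1 - K j * w m) / (w m - w i))).
rewrite (eq_bigr (fun j => \sum_l bt l * x l * (c j * (K j / (1 - K j * w l))))); last first.
  move=> j _; rewrite eL mulrA mulr_sumr; apply: eq_bigr => l _; rewrite /c; ring.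
rewrite exchange_big /=.
rewrite (eq_bigr (fun l => bt l * x l * (A i / (bt i * Di * A l) * \prod_(m | m != i) (w m - w l)))); last first.
  move=> l _; rewrite -mulr_sumr; congr (_ * _).
  rewrite /c (eq_bigr _ (fun j _ => step j l)) -mulr_sumr; congr (_ * _).
  exact: F_ident.
rewrite (bigD1 i) //= [X in _ + X]big1 ?addr0; last first.
  move=> l li; rewrite (bigD1 l) //= subrr mul0r !mulr0 //.
rewrite -/Di; move: (A0 i) Di0 bt0 => p1 p2 p3; field; by rewrite p1 p2 p3.
Qed.

Section An0.
Context {R : realType} {V : normedModType R}.

Lemma derive_line (f : V -> R) x v :
  'D_v f x = 'D_1 (fun h : R => f (h *: v + x)) 0.
Proof.
rewrite /derive; apply: f_equal; apply: (f_equal (fun g => (g @ _)%classic)); apply/funext => h /=.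
by rewrite addr0 scale0r add0r [_%:A]mulr1.
Qed.

Lemma dchain {f : V -> R} {g : R -> R} {x v} :
  derivable f x v -> derivable g (f x) 1 ->
  derivable (g \o f) x v /\ 'D_v (g \o f) x = 'D_1 g (f x) * 'D_v f x.
Proof.
move=> df dg; have df1 := (derivable1P _ _ _).1 df.
set fl := fun h : R => f (h *: v + x) in df1.
have fl0 : fl 0 = f x by rewrite /fl scale0r add0r.
have dg' : derivable g (fl 0) 1 by rewrite fl0.
split.
  apply/derivable1P/derivable1_diffP.
  apply: (@differentiable_comp _ _ _ _ fl g); exact/derivable1_diffP.
rewrite !derive_line -!derive1E.
have := derive1_comp df1 dg'; rewrite fl0 => <-; by [].
Qed.

End An0.

Lemma is_derive_lnabs (R : realType) (y : R) : y != 0 -> is_derive y 1 (fun z => ln `|z|) y^-1.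
Proof.
move=> y0; case: (ltgtP y 0) => [yn|yp|]; last by move/eqP: y0.
- have dN : derivable (-%R : R -> R) y 1 by apply: derivable_opp.
  have dl : derivable (@ln R) (- y) 1.
    by apply: ex_derive; apply: is_derive1_ln; rewrite oppr_gt0.
  have [d1 e1] := @dchain R R (-%R) (@ln R) y 1 dN dl.
  apply: (@near_eq_is_derive _ _ _ (@ln R \o -%R)).
    near=> z; rewrite /= ltr0_norm //; near: z; exact: lt_nbhsl.
  apply: DeriveDef => //; rewrite e1.
  have [_ ->] := is_derive1_ln (x := - y) (ltac:(by rewrite oppr_gt0)).
  rewrite derive_val; by rewrite invrN mulrN mulNr opprK mulr1.
- apply: (@near_eq_is_derive _ _ _ (@ln R)); last exact: is_derive1_ln.
  near=> z; rewrite gtr0_norm //; near: z; exact: lt_nbhsr.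
Unshelve. all: by end_near.
Qed.

Section An.
Context {R : realType} {V : normedModType R}.
Implicit Types f g : V -> R.

Lemma dM {f g x v} : derivable f x v -> derivable g x v ->
  derivable (fun c => f c * g c) x v /\
  'D_v (fun c => f c * g c) x = f x * 'D_v g x + g x * 'D_v f x.
Proof. by move=> df dg; split; [exact: derivableM | exact: deriveM]. Qed.

Lemma dB {f g x v} : derivable f x v -> derivable g x v ->
  derivable (fun c => f c - g c) x v /\
  'D_v (fun c => f c - g c) x = 'D_v f x - 'D_v g x.
Proof. by move=> df dg; split; [exact: derivableB | exact: deriveB]. Qed.

Lemma dS N (h : 'I_N -> V -> R) x v : (forall i, derivable (h i) x v) ->
  derivable (fun c => \sum_i h i c) x v /\
  'D_v (fun c => \sum_i h i c) x = \sum_i 'D_v (h i) x.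
Proof.
move=> dh; have e : (fun c => \sum_i h i c) = \sum_i h i.
  by apply/funext => c; rewrite fct_sumE.
by rewrite e; split; [exact: derivable_sum | exact: derive_sum].
Qed.

Lemma dC (k : R) x v : derivable (fun _ : V => k) x v /\ 'D_v (fun _ : V => k) x = 0.
Proof. by split; [exact: derivable_cst | exact: derive_cst]. Qed.
End An.

Lemma key (R : realType) (V : normedModType R) N (U : set V) (bet om : 'I_N -> V -> R) (K : V -> R) (b v : V) :
  open U -> U b ->
  (forall l, derivable (bet l) b v) -> (forall l, derivable (om l) b v) -> derivable K b v ->
  (forall c, U c -> forall l, 1 - om l c * K c != 0) ->
  'D_v (fun c => \prod_l `|1 - om l c * K c| `^ bet l c) b = 0 ->
  \sum_l ('D_v (bet l) b * ln `|1 - om l b * K b| +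
     bet l b * (1 - om l b * K b)^-1 * - ('D_v (om l) b * K b + om l b * 'D_v K b)) = 0.
Proof.
move=> oU Ub dbet dom dK nz.
pose S c := \sum_l bet l c * ln `|1 - om l c * K c|.
have nb : \forall c \near b, (fun c => \prod_l `|1 - om l c * K c| `^ bet l c) c = (expR \o S) c.
  near=> c; rewrite /= /S expR_sum; apply: eq_bigr => l _.
  rewrite /powR normr_eq0 (negbTE (nz c _ l)) //.
  near: c; apply: open_nbhs_nbhs; by split.
rewrite (near_eq_derive _ nb).
have df l : derivable (fun c => 1 - om l c * K c) b v /\
   'D_v (fun c => 1 - om l c * K c) b = - ('D_v (om l) b * K b + om l b * 'D_v K b).
  have [d1 e1] := dM (dom l) dK.
  have [d2 e2] := dB (dC 1 b v).1 d1.
  split => //; rewrite e2 e1 (dC 1 b v).2 sub0r; congr (- _); ring.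
have dl l : derivable (fun c => ln `|1 - om l c * K c|) b v /\
   'D_v (fun c => ln `|1 - om l c * K c|) b = (1 - om l b * K b)^-1 * - ('D_v (om l) b * K b + om l b * 'D_v K b).
  have hd := @is_derive_lnabs _ _ (nz b Ub l).
  have [d1 e1] := dchain (df l).1 (@ex_derive _ _ _ _ _ _ _ hd).
  by split => //; rewrite e1 (df l).2 derive_val.
have dt l : derivable (fun c => bet l c * ln `|1 - om l c * K c|) b v /\
   'D_v (fun c => bet l c * ln `|1 - om l c * K c|) b =
   'D_v (bet l) b * ln `|1 - om l b * K b| + bet l b * (1 - om l b * K b)^-1 * - ('D_v (om l) b * K b + om l b * 'D_v K b).
  have [d1 e1] := dM (dbet l) (dl l).1.
  split => //; rewrite e1 (dl l).2; ring.
have [dSb eS] := @dS _ _ N (fun l c => bet l c * ln `|1 - om l c * K c|) b v (fun l => (dt l).1).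
have [_ ->] := dchain dSb (@ex_derive _ _ _ _ _ _ _ (is_derive_expR (S b))).
rewrite derive_val eS => /eqP; rewrite mulf_eq0 expR_eq0 /= => /eqP H; apply: etrans H; apply: esym.
by apply: eq_bigr => l _; rewrite (dt l).2.
Unshelve. all: by end_near.
Qed.

Lemma extP_widen {T : Type} n (f : 'I_n.+1 -> T) l (j : 'I_n.+1) :
  extP f l (widen_ord (leqnSn n.+1) j) = f j.
Proof.
rewrite /extP; case: insubP => [u _ hu | /negP]; last by rewrite /= ltn_ord.
by congr f; apply: val_inj; rewrite hu.
Qed.

Lemma extP_max {T : Type} n (f : 'I_n.+1 -> T) l : extP f l ord_max = l.
Proof. by rewrite /extP; case: insubP => [u hu _|] //=; rewrite ltnn in hu. Qed.

Lemma split_ord n (j : 'I_n.+2) :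
  j = ord_max \/ exists j' : 'I_n.+1, j = widen_ord (leqnSn n.+1) j'.
Proof.
have [->|ne] := eqVneq j ord_max; [by left|right].
have lt : (j < n.+1)%N.
  have := ltn_ord j; rewrite ltnS leq_eqVlt => /orP [/eqP h|//].
  by move: ne; rewrite -(inj_eq val_inj) /= h eqxx.
by exists (Ordinal lt); apply: val_inj.
Qed.

Lemma dcoord (R : realType) n (b v : 'rV[R]_n.+1) (j : 'I_n.+1) :
  derivable (fun c : 'rV[R]_n.+1 => c 0 j) b v /\
  'D_v (fun c : 'rV[R]_n.+1 => c 0 j) b = v 0 j.
Proof.
have did := @derivable_id _ 'rV[R]_n.+1 b v.
split; first by move/derivable_mxP: did => /(_ 0 j).
have := derive_mx did; rewrite derive_id => /(congr1 (fun M : 'rV[R]_n.+1 => M 0 j)).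
by rewrite mxE => ->.
Qed.

Lemma dbeta (R : realType) n (b v : 'rV[R]_n.+1) (l : 'I_n.+2) :
  derivable (fun c => betaP c l) b v /\
  'D_v (fun c => betaP c l) b = extP (fun j => v 0 j) (- \sum_j v 0 j) l.
Proof.
have [e|[j e]] := @split_ord n l; subst l.
  have -> : (fun c => betaP c ord_max) = (fun c : 'rV[R]_n.+1 => 1 - \sum_j c 0 j).
    by apply/funext => c; rewrite /betaP extP_max.
  have [d1 e1] := @dS _ _ n.+1 (fun j (c : 'rV[R]_n.+1) => c 0 j) b v (fun j => (@dcoord R n b v j).1).
  have [d2 e2] := dB (dC 1 b v).1 d1.
  split => //; rewrite e2 e1 (dC 1 b v).2 extP_max sub0r; congr (- _).
  by apply: eq_bigr => k _; rewrite (@dcoord R n b v k).2.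
have -> : (fun c => betaP c (widen_ord (leqnSn n.+1) j)) = (fun c : 'rV[R]_n.+1 => c 0 j).
  by apply/funext => c; rewrite /betaP extP_widen.
by rewrite extP_widen; exact: (@dcoord R n b v j).
Qed.

Lemma eqj (R : realType) n (U : set 'rV[R]_n.+1)
  (om : 'I_n.+2 -> 'rV[R]_n.+1 -> R) (kap : 'I_n.+1 -> 'rV[R]_n.+1 -> R)
  (b : 'rV[R]_n.+1) (q : 'I_n.+1) (j : 'I_n.+2) :
  open U -> U b ->
  (forall i b, U b -> differentiable (om i) b) ->
  (forall j b, U b -> differentiable (kap j) b) ->
  (forall j b, U b ->
     \sum_(i < n.+2) betaP b i * om i b / (1 - kap j b * om i b) = 0) ->
  'D_(e_dir q) (fun c => Gamma om c (kappaP kap c j)) b = 0 ->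
  (forall b, U b -> forall i j, 1 - kappaP kap b i * om j b != 0) ->
  ln `| (1 - kappaP kap b j * om (widen_ord (leqnSn n.+1) q) b)
               / (1 - kappaP kap b j * om ord_max b) |
  = kappaP kap b j * \sum_l betaP b l * 'D_(e_dir q) (om l) b / (1 - kappaP kap b j * om l b).
Proof.
move=> oU Ub hom hkap crit hG kw.
set v : 'rV[R]_n.+1 := e_dir q.
have dom l : derivable (om l) b v by apply: diff_derivable; exact: hom.
pose K := kappaP kap b j.
pose D' := 'D_v (fun c : 'rV[R]_n.+1 => kappaP kap c j) b.
have [dK hK] : derivable (fun c : 'rV[R]_n.+1 => kappaP kap c j) b v /\
   D' * \sum_l betaP b l * om l b / (1 - K * om l b) = 0.
  have [e|[j' e]] := @split_ord n j; subst j.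
    have e : (fun c : 'rV[R]_n.+1 => kappaP kap c ord_max) = (fun _ => 2).
      by apply/funext => c; rewrite /kappaP extP_max.
    by rewrite /D' e (dC 2 b v).2 mul0r; split => //; exact: (dC 2 b v).1.
  have e : (fun c : 'rV[R]_n.+1 => kappaP kap c (widen_ord (leqnSn n.+1) j')) = kap j'.
    by apply/funext => c; rewrite /kappaP extP_widen.
  rewrite /D' /K e /kappaP extP_widen crit // mulr0; split => //.
  by apply: diff_derivable; exact: hkap.
have nz c (Uc : U c) l : 1 - om l c * kappaP kap c j != 0 by rewrite mulrC; exact: kw.
have E := @key R _ n.+2 U (fun l (c : 'rV[R]_n.+1) => betaP c l) om (fun c : 'rV[R]_n.+1 => kappaP kap c j) b v oU Ub
   (fun l => (@dbeta R n b v l).1) dom dK nz hG.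
rewrite -/K in E hK.
have E1 : \sum_l 'D_v (fun c : 'rV[R]_n.+1 => betaP c l) b * ln `|1 - K * om l b|
    - K * \sum_l betaP b l * 'D_v (om l) b / (1 - K * om l b)
    - D' * \sum_l betaP b l * om l b / (1 - K * om l b) = 0.
  rewrite -[RHS]E !mulr_sumr -!sumrB; apply: eq_bigr => l _.
  rewrite [om l b * K]mulrC /D'; ring.
rewrite hK subr0 in E1; move/eqP: E1; rewrite subr_eq0 => /eqP <-.
under eq_bigr => l _ do rewrite (@dbeta R n b v l).2.
rewrite big_ord_recr /= extP_max.
under eq_bigr => k _ do rewrite extP_widen /v /e_dir mxE eqxx /=.
rewrite (bigD1 q) //= eqxx mul1r big1 ?addr0; last first.
  by move=> k; case: eqP => //= _ _; rewrite mul0r.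
rewrite (bigD1 q) //= big1 ?addr0; last by move=> k; rewrite /v /e_dir mxE; case: eqP.
rewrite /v /e_dir mxE !eqxx /= mulN1r.
have a0 := kw b Ub j (widen_ord (leqnSn n.+1) q).
have b0 := kw b Ub j ord_max.
by rewrite normrM normfV ln_div ?posrE ?normr_gt0.
Qed.

Theorem theorem1 (R : realType) (n : nat) (U : set 'rV[R]_n.+1)
  (om : 'I_n.+2 -> 'rV[R]_n.+1 -> R) (kap : 'I_n.+1 -> 'rV[R]_n.+1 -> R) :
  open U ->
  (forall i b, U b -> differentiable (om i) b) ->
  (forall j b, U b -> differentiable (kap j) b) ->
  (* kappa_1..kappa_{P-1} are critical points of Gamma *)
  (forall j b, U b ->
     \sum_(i < n.+2) betaP b i * om i b / (1 - kap j b * om i b) = 0) ->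
  (* total derivatives of Gamma(kappa_i) w.r.t. beta_q vanish, i = 1..P *)
  (forall i q b, U b ->
     'D_(e_dir q) (fun c => Gamma om c (kappaP kap c i)) b = 0) ->
  (* non-degeneracy *)
  (forall b, U b -> forall i j, i != j -> om i b != om j b) ->
  (forall b, U b -> forall i, om i b != 0) ->
  (forall b, U b -> forall i, betaP b i != 0) ->
  (forall b, U b -> forall i j, i != j -> kappaP kap b i != kappaP kap b j) ->
  (forall b, U b -> forall i, kappaP kap b i != 0) ->
  (forall b, U b -> forall i j, 1 - kappaP kap b i * om j b != 0) ->
  forall b, U b -> forall (i : 'I_n.+2) (q : 'I_n.+1),
    'D_(e_dir q) (om i) b =
    \sum_(j < n.+2)
      ((1 - kappaP kap b j * om i b) / (betaP b i * kappaP kap b j)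
       * (\prod_(k < n.+2 | k != j)
            ((1 - kappaP kap b k * om i b) / (kappaP kap b k - kappaP kap b j)))
       * (\prod_(l < n.+2 | l != i)
            ((1 - kappaP kap b j * om l b) / (om l b - om i b)))
       * ln `| (1 - kappaP kap b j * om (widen_ord (leqnSn n.+1) q) b)
               / (1 - kappaP kap b j * om ord_max b) |).
Proof.
move=> oU hom hkap crit dG omd om0 bt0 kd k0 kw b Ub i q.
apply: (@cauchy_inv R n.+2 (fun j => kappaP kap b j) (fun l => om l b) (betaP b)
  (fun l => 'D_(e_dir q) (om l) b)
  (fun j => ln `| (1 - kappaP kap b j * om (widen_ord (leqnSn n.+1) q) b)
               / (1 - kappaP kap b j * om ord_max b) |) i).
- by move=> j k; exact: kd.
- by move=> j; exact: k0.
- by move=> j l; exact: kw.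
- by move=> l m; exact: omd.
- exact: bt0.
- move=> j /=; rewrite (@eqj R n U om kap b q j oU Ub hom hkap crit (dG j q b Ub) kw). congr (_ * _); apply: eq_bigr => l _.
Qed.
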